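(* Consider the queueing system in the context under the MaxWeight policy with a diagonal matrix $\Delta$ with positive diagonal entries, in overload ($\rho\notin\mathcal{P}$). Let $H=\limsup_{t\to\infty}\langle \frac{X(t)}{t},\Delta\frac{X(t)}{t}\rangle$, and let $\{t_c\}$ be an increasing unbounded sequence with $\lim_{c\to\infty}X(t_c)/t_c=\eta$ and $\langle\eta,\Delta\eta\rangle=H$. Then there is no increasing unbounded sequence $\{t_a\}$ with $\lim_{a\to\infty}X(t_a)/t_a=\psi\ne\eta$. Therefore $\lim_{t\to\infty}X(t)/t=\eta$.
   Context: Model: $Q$ queues, finite set $\mathcal{S}=\{S_1,\dots,S_N\}\subset\mathbb{R}^Q_{\ge0}$ of service vectors, discrete time. Arrivals $A(t)$ with $0\le A_q(t)\le\bar A_q<\infty$ and $\rho_q=\lim_{t\to\infty}\frac1t\sum_{s=0}^{t-1}A_q(s)\in(0,\infty)$. Departures $D_q(t)=\min\{S_q(t),X_q(t)\}$, $X(t+1)=X(t)+A(t)-D(t)$, $X(0)=0$, with $S(t)\in\arg\max_{S\in\mathcal{S}}\langle S,\Delta X(t)\rangle$ (MaxWeight). Stability region $\mathcal{P}=\{r\in\mathbb{R}^Q_{\ge0}: r\le\sum_n\alpha_nS_n\text{ for some }\alpha_n\ge0,\sum_n\alpha_n=1\}$. *)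

(* Defs.v *)
From HB Require Import structures.
From mathcomp Require Import all_boot all_order all_algebra.
From mathcomp Require Import all_classical all_reals all_analysis.
Set Implicit Arguments. Unset Strict Implicit. Unset Printing Implicit Defensive.
Import Order.TTheory GRing.Theory Num.Theory.
Import numFieldNormedType.Exports.
Local Open Scope classical_set_scope.
Local Open Scope ring_scope.

(* Weighted inner product <u, Delta v> for the diagonal matrix
   Delta = diag(delta). *)
Definition dinner (R : realType) (Q : nat) (delta u v : 'I_Q -> R) : R :=
  \sum_(q < Q) u q * (delta q * v q).

Definition in_stab_region (R : realType) (Q N : nat)
  (Svec : 'I_N -> 'I_Q -> R) (r : 'I_Q -> R) : Prop :=
  (forall q, 0 <= r q) /\
  exists alpha : 'I_N -> R,
    (forall n, 0 <= alpha n) /\ \sum_(n < N) alpha n = 1 /\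
    (forall q, r q <= \sum_(n < N) alpha n * Svec n q).

(* The queueing system under MaxWeight with diagonal weights delta:
   sel t is the index of the service vector S(t) chosen at time t. *)
Definition maxweight_system (R : realType) (Q N : nat)
  (Svec : 'I_N -> 'I_Q -> R) (delta : 'I_Q -> R)
  (A : nat -> 'I_Q -> R) (Abar rho : 'I_Q -> R)
  (sel : nat -> 'I_N) (X : nat -> 'I_Q -> R) : Prop :=
  (forall n q, 0 <= Svec n q) /\
  (forall q, 0 < delta q) /\
  (forall t q, 0 <= A t q /\ A t q <= Abar q) /\
  (forall q, 0 < rho q) /\
  (forall q, (fun t : nat => (\sum_(s < t) A s q) / t%:R) @ \oo --> rho q) /\
  (forall q, X 0%N q = 0) /\
  (forall t q, X t.+1 q = X t q + A t q - Num.min (Svec (sel t) q) (X t q)) /\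
  (forall t n, dinner delta (Svec n) (X t) <= dinner delta (Svec (sel t)) (X t)).

Definition fluid_lim_along (R : realType) (Q : nat)
  (X : nat -> 'I_Q -> R) (tt : nat -> nat) (v : 'I_Q -> R) : Prop :=
  forall q, (fun c : nat => X (tt c) q / (tt c)%:R) @ \oo --> v q.

Definition strictly_increasing (tt : nat -> nat) : Prop :=
  forall m n, (m < n)%N -> (tt m < tt n)%N.

(* Main.v *)
Require Import Defs.
From HB Require Import structures.
From mathcomp Require Import all_boot all_order all_algebra.
From mathcomp Require Import all_classical all_reals all_analysis.
Import Order.TTheory GRing.Theory Num.Theory.
Import numFieldNormedType.Exports.
Local Open Scope classical_set_scope.
Local Open Scope ring_scope.
Set Implicit Arguments. Unset Strict Implicit. Unset Printing Implicit Defensive.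
From mathcomp Require Import ring lra.
Definition pp (R : realType) (x : R) : R := if 0 <= x then x else 0.

Lemma ppE (R : realType) (x : R) : (0 <= x /\ pp x = x) \/ (x < 0 /\ pp x = 0).
Proof. by rewrite /pp; case: (lerP 0 x) => h; [left|right]. Qed.
Lemma pp_ge0 (R : realType) (x : R) : 0 <= pp x.
Proof. by case: (ppE x) => [[h ->]|[h ->]]. Qed.
Lemma pp_ge (R : realType) (x : R) : x <= pp x.
Proof. by case: (ppE x) => [[h ->]|[h ->]] //; rewrite ltW. Qed.
Lemma pp_le (R : realType) (x y: R) : 0 <= y -> x <= y -> pp x <= y.
Proof. by case: (ppE x) => [[h ->]|[h ->]]. Qed.
Lemma pp_mul (R : realType) (x : R) : pp x * (x - pp x) = 0.
Proof. by case: (ppE x) => [[h ->]|[h ->]]; rewrite ?subrr ?mulr0 ?mul0r. Qed.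

Lemma pp_ineq (R : realType) (a b l : R) :
  (pp (a - l * b)) ^+ 2 <= (pp a) ^+ 2 - 2 * l * pp a * b + l ^+ 2 * b ^+ 2.
Proof.
case: (ppE a) => [[ha ea]|[ha ea]]; case: (ppE (a - l * b)) => [[hb eb]|[hb eb]];
  rewrite ?ea ?eb; nra.
Qed.

Definition mixS (R : realType) Q N (S : 'I_N -> 'I_Q -> R) (al : 'I_N -> R) (q : 'I_Q) : R :=
  \sum_(n < N) al n * S n q.
Definition gobj (R : realType) Q N (S : 'I_N -> 'I_Q -> R) (delta rho : 'I_Q -> R)
  (al : 'I_N -> R) : R :=
  \sum_(q < Q) delta q * (pp (rho q - mixS S al q)) ^+ 2.

Lemma le_sum_one (R : realType) N (F : 'I_N -> R) n :
  (forall m, 0 <= F m) -> F n <= \sum_(m < N) F m.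
Proof.
move=> h; rewrite (bigD1 n) //= lerDl; apply: sumr_ge0 => m _; exact: h.
Qed.

Lemma sum_kron (R : realType) N (F : 'I_N -> R) n :
  \sum_(m < N) (m == n)%:R * F m = F n.
Proof.
by rewrite (bigD1 n) //= eqxx mul1r big1 ?addr0 // => m /negbTE ->; rewrite mul0r.
Qed.

Lemma mixS_bounds (R : realType) Q N (S : 'I_N -> 'I_Q -> R) al q :
  (forall n q, 0 <= S n q) -> (forall n, 0 <= al n) -> \sum_(n < N) al n = 1 ->
  0 <= mixS S al q <= \sum_(n < N) S n q.
Proof.
move=> hS ha h1; apply/andP; split.
  by apply: sumr_ge0 => n _; rewrite mulr_ge0.
apply: ler_sum => n _.
have : al n <= 1 by rewrite -h1; apply: le_sum_one.
move=> h; have := hS n q; have := ha n; nra.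
Qed.

Lemma opt_approx (R : realType) Q N (S : 'I_N -> 'I_Q -> R) (delta rho : 'I_Q -> R)
  (n0 : 'I_N) (HS : forall n q, 0 <= S n q) (Hd : forall q, 0 < delta q)
  (kap : R) (hk : 0 < kap) :
  exists al : 'I_N -> R, (forall n, 0 <= al n) /\ \sum_(n < N) al n = 1 /\
    forall n, \sum_(q < Q) delta q * pp (rho q - mixS S al q) * (S n q - mixS S al q)
              <= kap.
Proof.
pose E := [set y : R | exists al : 'I_N -> R,
   [/\ (forall n, 0 <= al n), \sum_(n < N) al n = 1 & y = gobj S delta rho al]].
have E_lb : forall y, E y -> 0 <= y.
  move=> y [al [_ _ ->]]; apply: sumr_ge0 => q _.
  by apply: mulr_ge0; [exact: ltW | exact: sqr_ge0].
have hinf : has_inf E.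
  split; last by exists 0 => y /E_lb.
  exists (gobj S delta rho (fun m => (m == n0)%:R)).
  exists (fun m => (m == n0)%:R); split => //.
  by rewrite (bigD1 n0) //= eqxx big1 ?addr0 // => m /negbTE ->.
pose C3 := \sum_(q < Q) delta q * (\sum_(n < N) S n q) ^+ 2.
have C3ge0 : 0 <= C3.
  by apply: sumr_ge0 => q _; apply: mulr_ge0; [exact: ltW | exact: sqr_ge0].
pose lam := kap / (kap + (C3 + 1)).
have hkc : 0 < kap + (C3 + 1) by lra.
have lamE : lam * (kap + (C3 + 1)) = kap by rewrite /lam divfK // gt_eqF.
have lam0 : 0 < lam by rewrite /lam divr_gt0.
have lam1 : lam <= 1 by nra.
have [y Ey ylt] := inf_adherent (mulr_gt0 hk lam0) hinf.
case: Ey => al [al0 al1 yE].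
exists al; split => //; split => // n.
pose beta := fun m => (1 - lam) * al m + lam * (m == n)%:R.
have mixB : forall q, mixS S beta q = mixS S al q + lam * (S n q - mixS S al q).
  move=> q; rewrite /mixS /beta.
  under eq_bigr => m _ do rewrite mulrDl.
  rewrite big_split /=.
  under eq_bigr => m _ do rewrite -mulrA.
  under [X in _ + X]eq_bigr => m _ do rewrite -mulrA.
  rewrite -!mulr_sumr.
  rewrite sum_kron; ring.
have Ebeta : E (gobj S delta rho beta).
  exists beta; split => //.
    move=> m; rewrite /beta; apply: addr_ge0.
      by apply: mulr_ge0; [rewrite subr_ge0 | exact: al0].
    by apply: mulr_ge0; [exact: ltW | rewrite ler0n].
  rewrite /beta big_split /= -!mulr_sumr al1.
  have -> : \sum_(i < N) (i == n)%:R = 1 :> R.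
    by have := sum_kron (fun _ : 'I_N => (1:R)) n; under eq_bigr do rewrite mulr1.
  ring.
pose c := \sum_(q < Q) delta q * pp (rho q - mixS S al q) * (S n q - mixS S al q).
pose Cb := \sum_(q < Q) delta q * (S n q - mixS S al q) ^+ 2.
have gB : gobj S delta rho beta <= gobj S delta rho al - 2 * lam * c + lam ^+ 2 * Cb.
  rewrite /gobj /c /Cb !mulr_sumr -sumrN -!big_split /=.
  apply: ler_sum => q _; rewrite mixB opprD addrA.
  apply: le_trans (ler_wpM2l (ltW (Hd q)) (pp_ineq _ _ lam)) _.
  by rewrite le_eqVlt; apply/orP; left; apply/eqP; ring.
have CbC : Cb <= C3.
  apply: ler_sum => q _; apply: ler_wpM2l; first exact: ltW.
  have /andP[h1 h2] := mixS_bounds q HS al0 al1.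
  have h3 : S n q <= \sum_(m < N) S m q by apply: le_sum_one => m; exact: HS.
  have h4 := HS n q.
  nra.
have infle := ge_inf (proj2 hinf) Ebeta.
rewrite yE in ylt.
have key : 2 * lam * c < lam * (lam * C3 + kap).
  have : 0 <= lam ^+ 2 by rewrite sqr_ge0.
  nra.
have lC : lam * C3 <= kap.
  rewrite -lamE; apply: ler_wpM2l; [exact: ltW | lra].
have : 2 * c < lam * C3 + kap.
  by rewrite -(ltr_pM2l lam0) mulrA [lam * 2]mulrC.
move=> h2; have : c <= kap by lra.
by [].
Qed.

Lemma minP (R : realType) (x y : R) :
  Num.min x y <= x /\ Num.min x y <= y /\ (Num.min x y = x \/ Num.min x y = y).
Proof.
have h1 : Num.min x y <= x by rewrite ge_min lexx.
have h2 : Num.min x y <= y by rewrite ge_min lexx orbT.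
do 2 (split => //).
case: (lerP x y) => h.
  by left; apply/eqP; rewrite eq_le; apply/andP; split => //; rewrite le_min lexx h.
by right; apply/eqP; rewrite eq_le; apply/andP; split => //; rewrite le_min lexx (ltW h).
Qed.

Definition Smax (R : realType) Q N (S : 'I_N -> 'I_Q -> R) q := \sum_(n < N) S n q.

Lemma sys_facts (R : realType) (Q N : nat)
  (Svec : 'I_N -> 'I_Q -> R) (delta : 'I_Q -> R)
  (A : nat -> 'I_Q -> R) (Abar rho : 'I_Q -> R)
  (sel : nat -> 'I_N) (X : nat -> 'I_Q -> R)
  (Hsys : maxweight_system Svec delta A Abar rho sel X) :
  (forall t q, 0 <= X t q) /\
  (forall t q, 0 <= Num.min (Svec (sel t) q) (X t q) <= Svec (sel t) q) /\
  (forall n q, 0 <= Svec n q <= Smax Svec q).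
Proof.
case: Hsys => [HS [Hd [HA [Hrho [Havg [HX0 [Hstep Hmw]]]]]]].
have HX : forall t q, 0 <= X t q.
  elim=> [|t IH] q; first by rewrite HX0.
  rewrite Hstep; have [h1 [h2 _]] := minP (Svec (sel t) q) (X t q).
  have [h3 _] := HA t q. lra.
split => //; split.
  move=> t q; have [h1 [h2 hm]] := minP (Svec (sel t) q) (X t q).
  by apply/andP; split => //; case: hm => ->; [exact: HS|exact: HX].
move=> n q; rewrite HS /=; apply: le_sum_one => m; exact: HS.
Qed.

Definition eV (R : realType) Q N (S : 'I_N -> 'I_Q -> R) (rho : 'I_Q -> R) al q :=
  pp (rho q - mixS S al q).
Definition Yv (R : realType) Q (X : nat -> 'I_Q -> R) (e : 'I_Q -> R) (t : nat) q :=
  X t q - t%:R * e q.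
Definition Wv (R : realType) Q (delta : 'I_Q -> R) (X : nat -> 'I_Q -> R) e t :=
  \sum_(q < Q) delta q * (Yv X e t q) ^+ 2.

Lemma term2_bound (R : realType) (Q N : nat)
  (Svec : 'I_N -> 'I_Q -> R) (delta : 'I_Q -> R)
  (A : nat -> 'I_Q -> R) (Abar rho : 'I_Q -> R)
  (sel : nat -> 'I_N) (X : nat -> 'I_Q -> R)
  (Hsys : maxweight_system Svec delta A Abar rho sel X)
  (al : 'I_N -> R) (al0 : forall n, 0 <= al n) (al1 : \sum_(n < N) al n = 1)
  (kap : R)
  (hsl : forall n, \sum_(q < Q) delta q * pp (rho q - mixS Svec al q) *
                     (Svec n q - mixS Svec al q) <= kap) (t : nat) :
  \sum_(q < Q) delta q * Yv X (eV Svec rho al) t q *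
     ((rho q - eV Svec rho al q) - Num.min (Svec (sel t) q) (X t q))
  <= \sum_(q < Q) delta q * (Smax Svec q) ^+ 2 + t%:R * kap.
Proof.
have [HX [HD HSm]] := sys_facts Hsys.
case: Hsys => [HS [Hd [HA [Hrho [Havg [HX0 [Hstep Hmw]]]]]]].
set e := eV Svec rho al.
set s := mixS Svec al.
pose D q := Num.min (Svec (sel t) q) (X t q).
pose p q := rho q - e q.
have -> : \sum_(q < Q) delta q * Yv X e t q * (p q - D q) =
   \sum_(q < Q) delta q * X t q * p q - \sum_(q < Q) delta q * X t q * D q
   - t%:R * \sum_(q < Q) delta q * e q * p q + t%:R * \sum_(q < Q) delta q * e q * D q.
  rewrite !mulr_sumr -!sumrN -!big_split /=; apply: eq_bigr => q _.
  rewrite /Yv; ring.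
have i1 : \sum_(q < Q) delta q * X t q * p q <= \sum_(q < Q) delta q * X t q * s q.
  apply: ler_sum => q _; apply: ler_wpM2l.
    by apply: mulr_ge0; [exact: ltW | exact: HX].
  by have := pp_ge (rho q - s q); rewrite /p /e /eV -/s; lra.
have i2 : \sum_(q < Q) delta q * X t q * s q <= dinner delta (Svec (sel t)) (X t).
  have -> : \sum_(q < Q) delta q * X t q * s q =
            \sum_(n < N) al n * dinner delta (Svec n) (X t).
    rewrite /s /mixS /dinner.
    under eq_bigr => q _ do rewrite mulr_sumr.
    rewrite exchange_big /=; apply: eq_bigr => n _; rewrite mulr_sumr.
    by apply: eq_bigr => q _; ring.
  have -> : dinner delta (Svec (sel t)) (X t) =
            \sum_(n < N) al n * dinner delta (Svec (sel t)) (X t).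
    by rewrite -mulr_suml al1 mul1r.
  by apply: ler_sum => n _; apply: ler_wpM2l => //; exact: Hmw.
have i3 : dinner delta (Svec (sel t)) (X t) <=
          \sum_(q < Q) delta q * X t q * D q + \sum_(q < Q) delta q * (Smax Svec q) ^+ 2.
  rewrite /dinner -big_split /=; apply: ler_sum => q _.
  have [m1 [m2 m3]] := minP (Svec (sel t) q) (X t q).
  have /andP[s0 s1] := HSm (sel t) q.
  have x0 := HX t q; have d0 := ltW (Hd q).
  rewrite /D; case: m3 => hm; rewrite hm; rewrite hm in m1 m2.
    have : 0 <= delta q * (Smax Svec q) ^+ 2 by apply: mulr_ge0 => //; exact: sqr_ge0.
    nra.
  have : Svec (sel t) q * X t q <= (Smax Svec q) ^+ 2 by nra.
  nra.
have i4 : \sum_(q < Q) delta q * e q * D q <= \sum_(q < Q) delta q * e q * Svec (sel t) q.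
  apply: ler_sum => q _; apply: ler_wpM2l.
    by apply: mulr_ge0; [exact: ltW | exact: pp_ge0].
  by have [m1 _] := minP (Svec (sel t) q) (X t q).
have i5 : \sum_(q < Q) delta q * e q * Svec (sel t) q <=
          \sum_(q < Q) delta q * e q * s q + kap.
  have := hsl (sel t).
  have -> : \sum_(q < Q) delta q * pp (rho q - mixS Svec al q) *
              (Svec (sel t) q - mixS Svec al q) =
            \sum_(q < Q) delta q * e q * Svec (sel t) q - \sum_(q < Q) delta q * e q * s q.
    rewrite -sumrN -big_split /=; apply: eq_bigr => q _; rewrite /e /eV /s; ring.
  lra.
have i6 : \sum_(q < Q) delta q * e q * p q = \sum_(q < Q) delta q * e q * s q.
  apply: eq_bigr => q _; rewrite /p /e /eV -/s.
  have := pp_mul (rho q - s q); set z := pp _ => hz.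
  have : z * (rho q - z) = z * s q by rewrite -[RHS]addr0 -hz; ring.
  by rewrite -!mulrA => ->.
have t0 : 0 <= t%:R :> R by rewrite ler0n.
have i7 : t%:R * \sum_(q < Q) delta q * e q * D q <=
          t%:R * (\sum_(q < Q) delta q * e q * s q + kap).
  by apply: ler_wpM2l => //; lra.
rewrite i6 in i7 *.
have i8 : t%:R * (\sum_(q < Q) delta q * e q * s q + kap) =
   t%:R * \sum_(q < Q) delta q * e q * s q + t%:R * kap by rewrite mulrDr.
lra.
Qed.

Lemma step_ineq (R : realType) (Q N : nat)
  (Svec : 'I_N -> 'I_Q -> R) (delta : 'I_Q -> R)
  (A : nat -> 'I_Q -> R) (Abar rho : 'I_Q -> R)
  (sel : nat -> 'I_N) (X : nat -> 'I_Q -> R)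
  (Hsys : maxweight_system Svec delta A Abar rho sel X)
  (al : 'I_N -> R) (al0 : forall n, 0 <= al n) (al1 : \sum_(n < N) al n = 1)
  (kap : R)
  (hsl : forall n, \sum_(q < Q) delta q * pp (rho q - mixS Svec al q) *
                     (Svec n q - mixS Svec al q) <= kap) (t : nat) :
  Wv delta X (eV Svec rho al) t.+1 <= Wv delta X (eV Svec rho al) t
    + 2 * \sum_(q < Q) delta q * Yv X (eV Svec rho al) t q * (A t q - rho q)
    + (2 * \sum_(q < Q) delta q * (Smax Svec q) ^+ 2
       + \sum_(q < Q) delta q * (Abar q + Smax Svec q + rho q) ^+ 2)
    + 2 * (t%:R * kap).
Proof.
have T2 := term2_bound Hsys al0 al1 hsl t.
have [HX [HD HSm]] := sys_facts Hsys.
case: Hsys => [HS [Hd [HA [Hrho [Havg [HX0 [Hstep Hmw]]]]]]].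
set e := eV Svec rho al in T2 *.
pose D q := Num.min (Svec (sel t) q) (X t q).
pose Z q := A t q - D q - e q.
have YS : forall q, Yv X e t.+1 q = Yv X e t q + Z q.
  by move=> q; rewrite /Yv /Z /D Hstep -natr1; ring.
have -> : Wv delta X e t.+1 = Wv delta X e t
    + 2 * \sum_(q < Q) delta q * Yv X e t q * (A t q - rho q)
    + 2 * \sum_(q < Q) delta q * Yv X e t q * ((rho q - e q) - D q)
    + \sum_(q < Q) delta q * Z q ^+ 2.
  rewrite /Wv !mulr_sumr -!big_split /=; apply: eq_bigr => q _.
  rewrite YS /Z; ring.
have ZC : \sum_(q < Q) delta q * Z q ^+ 2 <=
          \sum_(q < Q) delta q * (Abar q + Smax Svec q + rho q) ^+ 2.
  apply: ler_sum => q _; apply: ler_wpM2l; first exact: ltW.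
  have /andP[d0 d1] := HD t q.
  have /andP[s0 s1] := HSm (sel t) q.
  have [a0 a1] := HA t q.
  have r0 := ltW (Hrho q).
  have e0 : 0 <= e q by exact: pp_ge0.
  have e1 : e q <= rho q.
    apply: pp_le => //.
    have /andP[m0 _] := mixS_bounds q HS al0 al1.
    lra.
  rewrite /Z /D; nra.
lra.
Qed.

Lemma sum_ineq (R : realType) (Q N : nat)
  (Svec : 'I_N -> 'I_Q -> R) (delta : 'I_Q -> R)
  (A : nat -> 'I_Q -> R) (Abar rho : 'I_Q -> R)
  (sel : nat -> 'I_N) (X : nat -> 'I_Q -> R)
  (Hsys : maxweight_system Svec delta A Abar rho sel X)
  (al : 'I_N -> R) (al0 : forall n, 0 <= al n) (al1 : \sum_(n < N) al n = 1)
  (kap : R) (hk : 0 <= kap)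
  (hsl : forall n, \sum_(q < Q) delta q * pp (rho q - mixS Svec al q) *
                     (Svec n q - mixS Svec al q) <= kap) (t : nat) :
  Wv delta X (eV Svec rho al) t <=
    2 * \sum_(q < Q) delta q *
          \sum_(s < t) Yv X (eV Svec rho al) s q * (A s q - rho q)
    + t%:R * (2 * \sum_(q < Q) delta q * (Smax Svec q) ^+ 2
       + \sum_(q < Q) delta q * (Abar q + Smax Svec q + rho q) ^+ 2)
    + t%:R ^+ 2 * kap.
Proof.
have HX0 : forall q, X 0%N q = 0 by case: Hsys => [_ [_ [_ [_ [_ [h _]]]]]].
set e := eV Svec rho al.
pose C := 2 * \sum_(q < Q) delta q * (Smax Svec q) ^+ 2
       + \sum_(q < Q) delta q * (Abar q + Smax Svec q + rho q) ^+ 2.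
rewrite -/C.
elim: t => [|t IH].
  rewrite /Wv big1 ?mul0r ?add0r ?expr0n //=; last first.
    by move=> q _; rewrite /Yv HX0 mul0r subrr expr0n /= mulr0.
  rewrite big1 ?mulr0 ?mul0r ?addr0 //.
  by move=> q _; rewrite big_ord0 mulr0.
have := step_ineq Hsys al0 al1 hsl t; rewrite -/e -/C => hs.
have -> : \sum_(q < Q) delta q * \sum_(s < t.+1) Yv X e s q * (A s q - rho q) =
   \sum_(q < Q) delta q * \sum_(s < t) Yv X e s q * (A s q - rho q)
   + \sum_(q < Q) delta q * Yv X e t q * (A t q - rho q).
  rewrite -big_split /=; apply: eq_bigr => q _; rewrite big_ord_recr /=; ring.
have : 0 <= kap * t%:R by rewrite mulr_ge0 ?ler0n.
rewrite -natr1; nra.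
Qed.

Lemma sbp (R : realType) (Y a : nat -> R) (t : nat) :
  \sum_(s < t) Y s * a s =
  Y t * (\sum_(r < t) a r) -
  \sum_(s < t) (Y s.+1 - Y s) * (\sum_(r < s.+1) a r).
Proof.
elim: t => [|t IH]; first by rewrite !big_ord0 mulr0 subr0.
rewrite big_ord_recr /= IH [in RHS]big_ord_recr /= [in RHS]big_ord_recr /=.
set u := \sum_(r < t) a r.
rewrite big_ord_recr /= -/u.
ring.
Qed.

Lemma Y_lin (R : realType) (Y : nat -> R) (L : R) :
  Y 0%N = 0 -> (forall s, `|Y s.+1 - Y s| <= L) -> forall t, `|Y t| <= L * t%:R.
Proof.
move=> h0 hL; elim=> [|t IH]; first by rewrite h0 normr0 mulr0.
have : `|Y t.+1| <= `|Y t.+1 - Y t| + `|Y t|.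
  by have := ler_normD (Y t.+1 - Y t) (Y t); rewrite subrK.
have := hL t; rewrite -natr1; lra.
Qed.

Lemma sbp_bound (R : realType) (Y a : nat -> R) (L eta K0 : R) :
  Y 0%N = 0 -> (forall s, `|Y s.+1 - Y s| <= L) -> 0 <= L -> 0 <= eta -> 0 <= K0 ->
  (forall s, `|\sum_(r < s) a r| <= eta * s%:R + K0) ->
  forall t, `|\sum_(s < t) Y s * a s| <= 2 * L * (eta * t%:R ^+ 2 + K0 * t%:R).
Proof.
move=> h0 hL L0 e0 K00 hB t.
rewrite sbp.
have hY := Y_lin h0 hL t.
have t0 : 0 <= t%:R :> R by rewrite ler0n.
have h1 : `|Y t * \sum_(r < t) a r| <= L * t%:R * (eta * t%:R + K0).
  rewrite normrM; apply: ler_pM => //; exact: hB.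
have h2 : `|\sum_(s < t) (Y s.+1 - Y s) * \sum_(r < s.+1) a r| <=
          t%:R * (L * (eta * t%:R + K0)).
  apply: le_trans (ler_norm_sum _ _ _) _.
  have -> : t%:R * (L * (eta * t%:R + K0)) = \sum_(s < t) (L * (eta * t%:R + K0)).
    by rewrite sumr_const card_ord mulr_natl.
  apply: ler_sum => s _; rewrite normrM; apply: ler_pM => //.
  apply: le_trans (hB s.+1) _; apply: lerD => //; apply: ler_wpM2l => //.
  by rewrite ler_nat.
have := ler_normB (Y t * \sum_(r < t) a r)
   (\sum_(s < t) (Y s.+1 - Y s) * \sum_(r < s.+1) a r).
nra.
Qed.

Lemma B_bound (R : realType) (A : nat -> R) (Abar rho : R) :
  (forall t, 0 <= A t /\ A t <= Abar) -> 0 <= rho ->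
  (fun t : nat => (\sum_(s < t) A s) / t%:R) @ \oo --> rho ->
  forall eta, 0 < eta -> exists K0, 0 <= K0 /\
    forall s, `|\sum_(r < s) (A r - rho)| <= eta * s%:R + K0.
Proof.
move=> hA r0 hc eta e0.
have := (proj1 (cvgrPdist_le _ _) hc) eta e0.
case=> N _ HN.
have Ab0 : 0 <= Abar by have [h1 h2] := hA 0%N; lra.
exists (N%:R * (Abar + rho)); split; first by apply: mulr_ge0; [rewrite ler0n|lra].
move=> s.
have es0 : 0 <= eta * s%:R by rewrite mulr_ge0 ?ler0n // ltW.
case: (ltnP s N) => hsN.
  apply: le_trans (ler_norm_sum _ _ _) _.
  apply: le_trans (_ : _ <= \sum_(r < s) (Abar + rho)) _.
    apply: ler_sum => r _; have [h1 h2] := hA r.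
    rewrite ler_norml; apply/andP; split; lra.
  rewrite sumr_const card_ord -mulr_natl.
  have : s%:R * (Abar + rho) <= N%:R * (Abar + rho).
    by apply: ler_wpM2r; [lra | rewrite ler_nat ltnW].
  lra.
have := HN s hsN; rewrite /= => hd.
case: (posnP s) => [->|sp].
  by rewrite big_ord0 normr0 mulr0 add0r; apply: mulr_ge0; [rewrite ler0n|lra].
have sR : 0 < s%:R :> R by rewrite ltr0n.
have -> : \sum_(r < s) (A r - rho) = s%:R * ((\sum_(r < s) A r) / s%:R - rho).
  rewrite sumrB sumr_const card_ord -mulr_natl; field.
  by apply/eqP => h; rewrite h ltxx in sR.
rewrite normrM (ger0_norm (ltW sR)) distrC.
have : s%:R * `|rho - (\sum_(r < s) A r) / s%:R| <= s%:R * eta.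
  by apply: ler_wpM2l; [exact: ltW|].
have : 0 <= N%:R * (Abar + rho) by apply: mulr_ge0; [rewrite ler0n|lra].
rewrite mulrC in es0. lra.
Qed.

Lemma Y_inc (R : realType) (Q N : nat)
  (Svec : 'I_N -> 'I_Q -> R) (delta : 'I_Q -> R)
  (A : nat -> 'I_Q -> R) (Abar rho : 'I_Q -> R)
  (sel : nat -> 'I_N) (X : nat -> 'I_Q -> R)
  (Hsys : maxweight_system Svec delta A Abar rho sel X)
  (al : 'I_N -> R) (al0 : forall n, 0 <= al n) (al1 : \sum_(n < N) al n = 1) q s :
  `|Yv X (eV Svec rho al) s.+1 q - Yv X (eV Svec rho al) s q|
     <= Abar q + Smax Svec q + rho q.
Proof.
have [HX [HD HSm]] := sys_facts Hsys.
case: Hsys => [HS [Hd [HA [Hrho [Havg [HX0 [Hstep Hmw]]]]]]].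
set e := eV Svec rho al.
have -> : Yv X e s.+1 q - Yv X e s q =
   A s q - Num.min (Svec (sel s) q) (X s q) - e q.
  by rewrite /Yv Hstep -natr1; ring.
have /andP[d0 d1] := HD s q.
have /andP[s0 s1] := HSm (sel s) q.
have [a0 a1] := HA s q.
have r0 := ltW (Hrho q).
have e0 : 0 <= e q by exact: pp_ge0.
have e1 : e q <= rho q.
  apply: pp_le => //.
  have /andP[m0 _] := mixS_bounds q HS al0 al1.
  lra.
rewrite ler_norml; apply/andP; split; lra.
Qed.

Lemma main_bound (R : realType) (Q N : nat)
  (Svec : 'I_N -> 'I_Q -> R) (delta : 'I_Q -> R)
  (A : nat -> 'I_Q -> R) (Abar rho : 'I_Q -> R)
  (sel : nat -> 'I_N) (X : nat -> 'I_Q -> R)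
  (Hsys : maxweight_system Svec delta A Abar rho sel X)
  (kap : R) (hk : 0 < kap) :
  exists (e : 'I_Q -> R) (T : nat), forall t, (T <= t)%N ->
    Wv delta X e t <= kap * t%:R ^+ 2.
Proof.
have [HX [HD HSm]] := sys_facts Hsys.
have Hsys' := Hsys.
case: Hsys' => [HS [Hd [HA [Hrho [Havg [HX0 [Hstep Hmw]]]]]]].
pose k1 := kap / 3.
have k10 : 0 < k1 by rewrite /k1 divr_gt0.
have [al [al0 [al1 hsl]]] := @opt_approx R Q N Svec delta rho (sel 0%N) HS Hd k1 k10.
set e := eV Svec rho al.
pose L q := Abar q + Smax Svec q + rho q.
have L0 : forall q, 0 <= L q.
  move=> q; have [a0 a1] := HA 0%N q; have /andP[s0 s1] := HSm (sel 0%N) q.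
  have := Hrho q; rewrite /L; lra.
pose SL := \sum_(q < Q) delta q * L q.
have SL0 : 0 <= SL by apply: sumr_ge0 => q _; apply: mulr_ge0; [exact: ltW|].
pose eta0 := k1 / (4 * SL + 1).
have eta00 : 0 < eta0 by rewrite /eta0 divr_gt0 //; lra.
have etaE : eta0 * (4 * SL + 1) = k1 by rewrite /eta0 divfK //; apply/eqP => h; lra.
have hB : forall q, exists K0, 0 <= K0 /\
    forall s, `|\sum_(r < s) (A r q - rho q)| <= eta0 * s%:R + K0.
  move=> q; exact: (@B_bound R (fun t => A t q) (Abar q) (rho q)
     (fun t => HA t q) (ltW (Hrho q)) (Havg q) eta0 eta00).
have [K0 hK0] := fin_all_exists hB.
pose C := 2 * \sum_(q < Q) delta q * (Smax Svec q) ^+ 2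
       + \sum_(q < Q) delta q * (Abar q + Smax Svec q + rho q) ^+ 2.
pose C' := C + 4 * \sum_(q < Q) delta q * L q * K0 q.
have C'0 : 0 <= C'.
  rewrite /C'; apply: addr_ge0.
    apply: addr_ge0; [apply: mulr_ge0 => //|];
      apply: sumr_ge0 => q _; apply: mulr_ge0; try exact: ltW; exact: sqr_ge0.
  apply: mulr_ge0 => //; apply: sumr_ge0 => q _.
  apply: mulr_ge0; [apply: mulr_ge0; [exact: ltW|exact: L0]|exact: (proj1 (hK0 q))].
pose T := Num.Def.archi_bound (C' / k1).
exists e, T => t hT.
have hs := sum_ineq Hsys al0 al1 (ltW k10) hsl t.
rewrite -/e in hs.
have t0 : 0 <= t%:R :> R by rewrite ler0n.
have hT' : C' / k1 < t%:R.
  apply: lt_le_trans (archi_boundP _) _; first by rewrite divr_ge0 // ltW.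
  by rewrite ler_nat.
have hT'' : C' <= k1 * t%:R.
  by rewrite -ler_pdivrMl // ltW // mulrC.
have hsum : \sum_(q < Q) delta q * \sum_(s < t) Yv X e s q * (A s q - rho q) <=
   2 * eta0 * SL * t%:R ^+ 2 + 2 * t%:R * \sum_(q < Q) delta q * L q * K0 q.
  have -> : 2 * eta0 * SL * t%:R ^+ 2 + 2 * t%:R * \sum_(q < Q) delta q * L q * K0 q
     = \sum_(q < Q) delta q * (2 * L q * (eta0 * t%:R ^+ 2 + K0 q * t%:R)).
    rewrite [RHS](eq_bigr (fun q => 2 * eta0 * t%:R ^+ 2 * (delta q * L q)
                  + 2 * t%:R * (delta q * L q * K0 q))); last by move=> q _; ring.
    by rewrite big_split /= -!mulr_sumr /SL; ring.
  apply: ler_sum => q _; apply: ler_wpM2l; first exact: ltW.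
  apply: le_trans (ler_norm _) _.
  have [K00 hKq] := hK0 q.
  have Y0 : Yv X e 0%N q = 0 by rewrite /Yv HX0 mul0r subrr.
  exact: (@sbp_bound R (fun s => Yv X e s q) (fun s => A s q - rho q) (L q) eta0 (K0 q)
     Y0 (fun s => Y_inc Hsys al0 al1 q s) (L0 q) (ltW eta00) K00 hKq t).
have h4 : 4 * eta0 * SL <= k1.
  rewrite -etaE; have := ltW eta00; nra.
have h5 : 4 * eta0 * SL * t%:R ^+ 2 <= k1 * t%:R ^+ 2.
  by apply: ler_wpM2r => //; exact: sqr_ge0.
have h6 : C' * t%:R <= k1 * t%:R ^+ 2.
  by rewrite expr2 mulrA; apply: ler_wpM2r.
have hk3 : kap * t%:R ^+ 2 = 3 * (k1 * t%:R ^+ 2) by rewrite /k1; field.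
rewrite /C' mulrDl in h6.
have h7 : 2 * (2 * eta0 * SL * t%:R ^+ 2) = 4 * eta0 * SL * t%:R ^+ 2 by ring.
have h8 : 2 * (2 * t%:R * \sum_(q < Q) delta q * L q * K0 q) =
   4 * (\sum_(q < Q) delta q * L q * K0 q) * t%:R by ring.
have h9 : t%:R ^+ 2 * k1 = k1 * t%:R ^+ 2 by ring.
have h10 : t%:R * C = C * t%:R by ring.
rewrite -/C in hs.
clearbody k1 SL eta0 C e.
lra.
Qed.

Lemma si_ge (tt : nat -> nat) : strictly_increasing tt -> forall c, (c <= tt c)%N.
Proof.
move=> h; elim=> [|c IH] //.
by apply: leq_ltn_trans IH (h c c.+1 (ltnSn c)).
Qed.

Lemma small_eq0 (R : realType) (x : R) : 0 <= x -> (forall d, 0 < d -> x <= d) -> x = 0.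
Proof.
move=> x0 h; case: (lerP x 0) => hx; first by apply/eqP; rewrite eq_le hx x0.
have := h (x / 2); rewrite divr_gt0 // => /(_ isT) hh; lra.
Qed.

Lemma ev_ex (R : realType) (f : nat -> R) (l : R) :
  f @ \oo --> l -> forall d, 0 < d -> exists N, forall n, (N <= n)%N -> `|l - f n| <= d.
Proof.
move=> hc d d0; have := (proj1 (cvgrPdist_le _ _) hc) d d0.
by case=> N _ HN; exists N.
Qed.

Lemma sub_lim (R : realType) (f : nat -> R) (l m : R) (ta : nat -> nat) :
  (forall c, (c <= ta c)%N) -> f @ \oo --> l -> (fun c => f (ta c)) @ \oo --> m -> l = m.
Proof.
move=> hta hl hm.
suff : `|l - m| = 0 by move/eqP; rewrite normr_eq0 subr_eq0 => /eqP.
apply: small_eq0 => // d d0.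
have d2 : 0 < d / 2 by rewrite divr_gt0.
have [N1 h1] := ev_ex hl d2.
have [N2 h2] := ev_ex hm d2.
have := h1 (ta (maxn N1 N2)) (leq_trans (leq_maxl _ _) (hta _)).
have := h2 (maxn N1 N2) (leq_maxr _ _).
have := ler_normD (l - f (ta (maxn N1 N2))) (f (ta (maxn N1 N2)) - m).
rewrite addrA subrK distrC [`|_ - m|]distrC.
lra.
Qed.

Lemma conv_main (R : realType) (Q N : nat)
  (Svec : 'I_N -> 'I_Q -> R) (delta : 'I_Q -> R)
  (A : nat -> 'I_Q -> R) (Abar rho : 'I_Q -> R)
  (sel : nat -> 'I_N) (X : nat -> 'I_Q -> R)
  (Hsys : maxweight_system Svec delta A Abar rho sel X)
  (tc : nat -> nat) (eta : 'I_Q -> R)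
  (Htc : strictly_increasing tc)
  (Heta : fluid_lim_along X tc eta) :
  forall q, (fun t : nat => X t q / t%:R) @ \oo --> eta q.
Proof.
have Hd : forall q, 0 < delta q by case: Hsys => [_ [h _]].
move=> q; apply/cvgrPdist_le => eps e0.
have e2 : 0 < eps / 2 by rewrite divr_gt0.
have k0 : 0 < delta q * (eps / 2) ^+ 2 by rewrite mulr_gt0 // exprn_gt0.
have [e [T hT]] := main_bound Hsys k0.
have loc : forall t, (maxn T 1 <= t)%N -> `|X t q / t%:R - e q| <= eps / 2.
  move=> t ht.
  have t1 : (0 < t)%N by apply: leq_trans ht; rewrite leq_maxr.
  have tR : 0 < t%:R :> R by rewrite ltr0n.
  have := hT t (leq_trans (leq_maxl _ _) ht).
  have : delta q * (Yv X e t q) ^+ 2 <= Wv delta X e t.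
    rewrite /Wv; apply: (@le_sum_one R Q (fun m => delta m * (Yv X e t m) ^+ 2) q) => m.
    by apply: mulr_ge0; [exact: ltW | exact: sqr_ge0].
  set z := X t q / t%:R.
  have Xz : X t q = z * t%:R by rewrite /z divfK // gt_eqF.
  rewrite /Yv Xz => h1 h2.
  have h3 : delta q * ((z - e q) ^+ 2 * t%:R ^+ 2) <=
            delta q * ((eps / 2) ^+ 2 * t%:R ^+ 2).
    have -> : delta q * ((z - e q) ^+ 2 * t%:R ^+ 2) =
              delta q * (z * t%:R - t%:R * e q) ^+ 2 by ring.
    have -> : delta q * ((eps / 2) ^+ 2 * t%:R ^+ 2) =
              delta q * (eps / 2) ^+ 2 * t%:R ^+ 2 by ring.
    exact: le_trans h1 h2.
  rewrite ler_pM2l // ler_pM2r ?exprn_gt0 // in h3.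
  rewrite ler_norml; apply/andP; split; nra.
have ee : `|eta q - e q| <= eps / 2.
  case: (lerP `|eta q - e q| (eps / 2)) => // hlt.
  pose d := (`|eta q - e q| - eps / 2) / 2.
  have d0 : 0 < d by rewrite /d divr_gt0 // subr_gt0.
  have [N1 h1] := ev_ex (Heta q) d0.
  pose c := maxn N1 (maxn T 1).
  have hc := si_ge Htc c.
  have := h1 c (leq_maxl _ _).
  have := loc (tc c) (leq_trans (leq_maxr _ _) hc).
  have := ler_normD (eta q - X (tc c) q / (tc c)%:R) (X (tc c) q / (tc c)%:R - e q).
  rewrite addrA subrK.
  rewrite /d; lra.
exists (maxn T 1) => // t /= ht.
have := loc t ht.
have := ler_normD (eta q - e q) (e q - X t q / t%:R).
rewrite addrA subrK [`|e q - _|]distrC.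
lra.
Qed.

Unset Implicit Arguments.

Theorem proposition1 (R : realType) (Q N : nat)
  (Svec : 'I_N -> 'I_Q -> R) (delta : 'I_Q -> R)
  (A : nat -> 'I_Q -> R) (Abar rho : 'I_Q -> R)
  (sel : nat -> 'I_N) (X : nat -> 'I_Q -> R)
  (Hsys : maxweight_system Svec delta A Abar rho sel X)
  (Hover : ~ in_stab_region Svec rho)
  (tc : nat -> nat) (eta : 'I_Q -> R)
  (Htc : strictly_increasing tc)
  (Heta : fluid_lim_along X tc eta)
  (HH : ((dinner delta eta eta)%:E =
         limn_esup (fun t : nat =>
           (dinner delta (fun q => X t q / t%:R) (fun q => X t q / t%:R))%:E))%E) :
  (~ exists (ta : nat -> nat) (psi : 'I_Q -> R),
       strictly_increasing ta /\ fluid_lim_along X ta psi /\ psi <> eta) /\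
  (forall q, (fun t : nat => X t q / t%:R) @ \oo --> eta q).
Proof.
have Hc := conv_main Hsys Htc Heta.
split => //.
case=> ta [psi [hta [hpsi hne]]]; apply: hne; apply: funext => q.
apply: esym.
exact: (sub_lim (si_ge hta) (Hc q) (hpsi q)).
Qed.
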